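(* There exist an increasing function $g:\mathbb{N}\setminus\{0\}\to\mathbb{N}\setminus\{0\}$ and, for each $i\in\mathbb{N}\setminus\{0\}$, a regular $g(i)$-sided polygon $P^i\subseteq\mathbb{R}^2$ such that $S=\bigcup_{i=1}^\infty\big(P^i+i\,\mathbf e(1)\big)$ is a rational MICP representable set and the sets $P^i+i\,\mathbf e(1)$, $i\ge1$, are pairwise disjoint.
   Context: $\mathbf e(1)=(1,0)\in\mathbb{R}^2$. A set $S\subseteq\mathbb{R}^n$ is MICP representable if there is a closed convex $M\subseteq\mathbb{R}^{n+p+d}$ (variables $(\mathbf x,\mathbf y,\mathbf z)$) such that $\mathbf x\in S$ iff there exist $\mathbf y\in\mathbb{R}^p$, $\mathbf z\in\mathbb{Z}^d$ with $(\mathbf x,\mathbf y,\mathbf z)\in M$. It is rational MICP representable if such an $M$ exists with $\operatorname{proj}_{\mathbf z}(M)$ rationally unbounded, where $I\subseteq\mathbb{R}^d$ is rationally unbounded if for every image $I'\subseteq\mathbb{R}^{d'}$ of $I$ under a rational affine map, either $I'$ is bounded or its recession cone $I'_\infty=\{\mathbf r:\ \mathbf x+\lambda\mathbf r\in I'\ \forall\mathbf x\in I',\lambda\ge0\}$ contains a nonzero integer vector. *)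

(* Defs.v *)
From HB Require Import structures.
From mathcomp Require Import all_boot all_order all_algebra.
From mathcomp Require Import all_classical all_reals all_analysis.
Set Implicit Arguments. Unset Strict Implicit. Unset Printing Implicit Defensive.
Import Order.TTheory GRing.Theory Num.Theory.
Import numFieldNormedType.Exports.
Local Open Scope classical_set_scope.
Local Open Scope ring_scope.

Section Defs.
Variable R : realType.

Definition convex_set (k : nat) (M : set 'rV[R]_k) : Prop :=
  forall x y t, M x -> M y -> 0 <= t -> t <= 1 -> M (t *: x + (1 - t) *: y).

Definition int_vec (k : nat) (z : 'rV[R]_k) : Prop :=
  forall i, z 0 i \is a Num.int.

Definition rational (x : R) : Prop := exists q : rat, x = ratr q.

Definition MICP_rep_by (n p d : nat) (S : set 'rV[R]_n)
    (M : set 'rV[R]_(n + p + d)) : Prop :=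
  closed M /\ convex_set M /\
  forall x, S x <-> exists (y : 'rV[R]_p) (z : 'rV[R]_d),
                int_vec z /\ M (row_mx (row_mx x y) z).

Definition MICP_representable (n : nat) (S : set 'rV[R]_n) : Prop :=
  exists p d (M : set 'rV[R]_(n + p + d)), MICP_rep_by S M.

Definition proj_z (n p d : nat) (M : set 'rV[R]_(n + p + d)) : set 'rV[R]_d :=
  [set z | exists (x : 'rV[R]_n) (y : 'rV[R]_p), M (row_mx (row_mx x y) z)].

Definition bounded_set (k : nat) (I : set 'rV[R]_k) : Prop :=
  exists r : R, forall v, I v -> forall i, `|v 0 i| <= r.

Definition recession_cone (k : nat) (I : set 'rV[R]_k) : set 'rV[R]_k :=
  [set r | forall x (lam : R), I x -> 0 <= lam -> I (x + lam *: r)].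

Definition rationally_unbounded (d : nat) (I : set 'rV[R]_d) : Prop :=
  forall (d' : nat) (A : 'M[R]_(d, d')) (b : 'rV[R]_d'),
    (forall i j, rational (A i j)) -> (forall j, rational (b 0 j)) ->
    let I' := (fun v => v *m A + b) @` I in
    bounded_set I' \/
    exists r, recession_cone I' r /\ r != 0 /\ int_vec r.

Definition rational_MICP_representable (n : nat) (S : set 'rV[R]_n) : Prop :=
  exists p d (M : set 'rV[R]_(n + p + d)),
    MICP_rep_by S M /\ rationally_unbounded (proj_z M).

(* the closed convex region bounded by a regular k-gon (k >= 3) with
   center c, circumradius r > 0 and rotation angle th *)
Definition pt2 (a b : R) : 'rV[R]_2 := \row_(j < 2) (if j == 0 then a else b).

Definition regular_polygon (k : nat) (P : set 'rV[R]_2) : Prop :=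
  (3 <= k)%N /\
  exists (c : 'rV[R]_2) (r th : R), 0 < r /\
    let v := fun j : 'I_k =>
      c + r *: pt2 (cos (th + 2 * pi * j%:R / k%:R))
                   (sin (th + 2 * pi * j%:R / k%:R)) in
    P = [set x | exists w : 'I_k -> R, (forall j, 0 <= w j) /\
                  \sum_j w j = 1 /\ x = \sum_j w j *: v j].

Definition e1 : 'rV[R]_2 := pt2 1 0.

Definition translate_e1 (i : nat) (P : set 'rV[R]_2) : set 'rV[R]_2 :=
  (fun x => x + i%:R *: e1) @` P.

End Defs.

(* Main.v *)
Require Import Defs.
From HB Require Import structures.
From mathcomp Require Import all_boot all_order all_algebra.
From mathcomp Require Import all_classical all_reals all_analysis.
From Stdlib Require Import Lia.
From mathcomp Require Import ring lra zify.
Import Order.TTheory GRing.Theory Num.Theory.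
Import numFieldNormedType.Exports.
Local Open Scope classical_set_scope.
Local Open Scope ring_scope.
Set Implicit Arguments. Unset Strict Implicit. Unset Printing Implicit Defensive.

Section S.
Variable R : realType.

Definition kk (m : nat) : nat := (2 ^ m.+3)%N.
Definition hh (m : nat) : R := ((2 ^ m)%:R)^-1.
Definition rho (m : nat) : R := (1 - hh m) / 4.
Definition alpha (m : nat) : R := 2 * pi / (kk m)%:R.
Definition EE (m : nat) : R := 1 - cos (alpha m).
Definition Lf (m : nat) (t : R) : R :=
  (1 + cos (alpha m)) * rho m + (hh m + EE m) / 4 * (t - m%:R).

Lemma hh_gt0 m : 0 < hh m.
Proof. by rewrite /hh invr_gt0 ltr0n expn_gt0. Qed.

Lemma hh_le1 m : hh m <= 1.
Proof. rewrite /hh invf_le1 ?ler1n ?ltr0n ?expn_gt0 //. Qed.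

Lemma hhD m n : hh (m + n) = hh m * hh n.
Proof. by rewrite /hh expnD natrM invfM. Qed.

Lemma hh1 : hh 1 = 1/2.
Proof. by rewrite /hh expn1 div1r. Qed.

Lemma hhS m : hh m.+1 = hh m / 2.
Proof. by rewrite -addn1 hhD hh1 mul1r. Qed.

Definition DD (n : nat) : R := 1 - cos (pi / (2 ^ n)%:R).

Lemma DD_half n : DD n.+1 <= DD n / 2.
Proof.
rewrite /DD.
have -> : pi / (2 ^ n)%:R = (pi / (2 ^ n.+1)%:R) *+ 2 :> R.
  have -> : (2 ^ n.+1)%:R = 2 * (2 ^ n)%:R :> R by rewrite expnS natrM.
  have h0 : (2 ^ n)%:R != 0 :> R by rewrite pnatr_eq0 expn_eq0.
  by rewrite -mulr_natr; field.
rewrite cos_mulr2n.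
set c := cos _.
have c0 : 0 <= c.
  apply: cos_ge0_pihalf; apply/andP; split.
    by rewrite (@le_trans _ _ 0) // ?oppr_le0 ?divr_ge0 ?pi_ge0.
  have -> : pi / (2^n.+1)%:R = pi/2 * (2^n)%:R^-1 :> R.
    by rewrite expnS natrM invfM mulrA.
  rewrite -[X in _ <= X]mulr1 ler_wpM2l ?divr_ge0 ?pi_ge0 //.
  by rewrite invf_le1 ?ler1n ?ltr0n ?expn_gt0.
have c1 : c <= 1 by apply: cos_le1.
nra.
Qed.


Lemma DD_le n : DD n <= 2 * hh n.
Proof.
elim: n => [|n IH].
  by rewrite /DD /hh expn0 divr1 cospi invr1; lra.
rewrite hhS; apply: (le_trans (DD_half n)); lra.
Qed.

Lemma alphaE m : alpha m = pi / (2 ^ m.+2)%:R.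
Proof.
rewrite /alpha /kk.
have -> : (2 ^ m.+3)%:R = 2 * (2 ^ m.+2)%:R :> R by rewrite expnS natrM.
have h0 : (2 ^ m.+2)%:R != 0 :> R by rewrite pnatr_eq0 expn_eq0.
by field.
Qed.

Lemma EE_le m : EE m <= hh m / 2.
Proof.
rewrite /EE alphaE; apply: (le_trans (DD_le m.+2)).
rewrite !hhS; lra.
Qed.

Lemma EE_ge0 m : 0 <= EE m.
Proof. by rewrite /EE subr_ge0 cos_le1. Qed.

Lemma rho_ge0 m : 0 <= rho m.
Proof. by rewrite /rho divr_ge0 // subr_ge0 hh_le1. Qed.

Lemma rho_lt m : rho m < 1/4.
Proof. rewrite /rho; have := hh_gt0 m; lra. Qed.

Lemma two_pow n : (8 + 3 * n <= 2 ^ n.+3)%N.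
Proof. elim: n => // n IH; rewrite expnS; lia. Qed.

Lemma L2 (a b E x m : R) : 0 <= E*a + a*x + E*x + E + 2*(a*b) ->
  2 * ((1 - a*b)/4) <= (1 + (1-E)) * ((1-a)/4) + (a+E)/4 * (m + (x + 2) - m).
Proof.
move=> h; rewrite -subr_ge0.
have -> : (1 + (1-E)) * ((1-a)/4) + (a+E)/4 * (m + (x + 2) - m) - 2 * ((1 - a*b)/4) = (E*a + a*x + E*x + E + 2*(a*b))/4 by ring.
by rewrite divr_ge0.
Qed.
Lemma KI i m : i <> m -> 2 * rho i <= Lf m i%:R.
Proof.
move=> neq; rewrite /Lf /rho.
have C : cos (alpha m) = 1 - EE m by rewrite /EE; lra.
rewrite C.
case: (ltngtP i m) => [lt|gt|eq] //.
-
  have [n em] : exists n, m = (i + n.+1)%N by exists (m - i).-1; lia.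
  subst m.
  have E0 := EE_ge0 (i + n.+1); have E1 := EE_le (i + n.+1).
  rewrite hhD in E1 *; rewrite natrD.
  move: (EE _) E0 E1 => E E0 E1.
  have b0 : 0 < hh n.+1 := hh_gt0 _.
  have a0 : 0 < hh i := hh_gt0 _.
  have a1 : hh i <= 1 := hh_le1 _.
  have key : hh n.+1 * (8 + 3 * n%:R) <= 4 :> R.
    have := two_pow n; rewrite -(ler_nat R) natrD natrM.
    rewrite /hh !expnS !natrM => h.
    have p0 : 0 < (2 ^ n)%:R :> R by rewrite ltr0n expn_gt0.
    rewrite ler_pdivrMl; last by rewrite !mulr_gt0.
    lra.
  move: (hh n.+1) (hh i) b0 a0 a1 key E1 => b a b0 a0 a1 key E1.
  have n0 : 0 <= n%:R :> R by [].
  rewrite -natr1.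
  have t1 : 0 <= E * (a * b) by rewrite mulr_ge0 // ?mulr_ge0 // ltW.
  have t3 : a * (b * (8 + 3 * n%:R)) <= a * 4 by rewrite ler_wpM2l // ltW.
  have t2 : E * (n%:R + 2) <= (a * b / 2) * (n%:R + 2) by rewrite ler_wpM2r //; lra.
  nra.
- have [n em] : exists n, i = (m + n.+1)%N by exists (i - m).-1; lia.
  subst i.
  have E0 := EE_ge0 m.
  rewrite hhD natrD.
  move: (EE _) E0 => E E0.
  have a0 : 0 < hh m := hh_gt0 _.
  have a1 : hh m <= 1 := hh_le1 _.
  have b0 : 0 < hh n.+1 := hh_gt0 _.
  clear neq gt C; move: b0; case: n => [|n] b0.
    rewrite hh1.
    move: (hh m) a0 a1 => a a0 a1.
    have : 0 <= E * a by rewrite mulr_ge0 // ltW.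
    nra.
  move: (hh m) (hh n.+2) a0 a1 b0 => a b a0 a1 b0.
  rewrite -[n.+2]addn2 natrD.
  have n0 : 0 <= n%:R :> R by [].
  have ? : 0 <= E * a by rewrite mulr_ge0 // ltW.
  have ? : 0 <= a * b by rewrite mulr_ge0 // ltW.
  have ? : 0 <= E * n%:R by rewrite mulr_ge0.
  have ? : 0 <= a * n%:R by rewrite mulr_ge0 // ltW.
  have h5 : 0 <= E * a + a * n%:R + E * n%:R + E + 2 * (a * b) by lra.
  exact: L2.
Qed.

End S.
Section G.
Variable R : realType.

Definition ang (m j : nat) : R := 0 + 2 * pi * j%:R / (kk m)%:R.
Definition dir (m j : nat) : 'rV[R]_2 := pt2 (cos (ang m j)) (sin (ang m j)).
Definition vtx (m j : nat) : 'rV[R]_2 :=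
  0 + rho R m *: pt2 (cos (ang m j)) (sin (ang m j)).
Definition Pset (m : nat) : set 'rV[R]_2 :=
  [set x | exists w : 'I_(kk m) -> R, (forall j, 0 <= w j) /\
     \sum_j w j = 1 /\ x = \sum_j w j *: vtx m j].
Definition cs (m j : nat) (u : 'rV[R]_2) : R :=
  cos (ang m j) * u 0 0 + sin (ang m j) * u 0 1.
Definition nrm (m j : nat) (u : 'rV[R]_2) : R := cs m j u + cs m j.+1 u.
Definition cr (m j : nat) (u : 'rV[R]_2) : R :=
  cos (ang m j) * u 0 1 - sin (ang m j) * u 0 0.

Lemma pt2E0 (a b : R) : pt2 a b 0 0 = a.
Proof. by rewrite /pt2 mxE. Qed.
Lemma pt2E1 (a b : R) : pt2 a b 0 1 = b.
Proof. by rewrite /pt2 mxE. Qed.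

Lemma rV2E (u : 'rV[R]_2) : u = pt2 (u 0 0) (u 0 1).
Proof.
apply/rowP => j; rewrite /pt2 mxE.
case: j => [[|[|//]] Hj] /=.
  by congr (u _ _); apply/val_inj.
by congr (u _ _); apply/val_inj.
Qed.

Lemma kk_gt0 m : (0 < kk m)%N.
Proof. by rewrite /kk expn_gt0. Qed.

Lemma kkR m : (kk m)%:R != 0 :> R.
Proof. by rewrite pnatr_eq0 -lt0n kk_gt0. Qed.

Lemma angS m j : ang m j.+1 = ang m j + alpha R m.
Proof. rewrite /ang /alpha -natr1; field; exact: kkR. Qed.

Lemma ang_half m j : ang m (j + 2 ^ m.+2) = ang m j + pi.
Proof.
rewrite /ang /kk natrD.
have -> : (2 ^ m.+3)%:R = 2 * (2 ^ m.+2)%:R :> R by rewrite expnS natrM.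
have h0 : (2 ^ m.+2)%:R != 0 :> R by rewrite pnatr_eq0 expn_eq0.
by field; rewrite pnatr_eq0 expn_eq0.
Qed.

Lemma ang_full m : ang m (kk m) = pi *+ 2.
Proof. rewrite /ang -mulr_natr; field; exact: kkR. Qed.

Lemma ang0 m : ang m 0 = 0.
Proof. by rewrite /ang mulr0 mul0r addr0. Qed.


Lemma trig_id (x a : R) : 1 + cos (a *+ 2) - cos (x *+ 2) - cos ((x - a) *+ 2)
  = 4 * cos a * sin x * sin (x - a).
Proof.
apply/eqP; rewrite -subr_eq0; apply/eqP.
rewrite !cos_mulr2n cosB sinB.
transitivity (-(2 + 2 * cos a ^+2) * (cos x ^+ 2 + sin x ^+ 2 - 1)
   - 2 * sin x ^+ 2 * (cos a ^+ 2 + sin a ^+ 2 - 1)); first ring.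
by rewrite !cos2Dsin2 !subrr !mulr0 subrr.
Qed.

Lemma sin_sign (k j l : nat) : (0 < k)%N -> (j < k)%N -> (l < k)%N ->
  0 <= sin ((l%:R - j%:R) * (pi / k%:R)) * sin ((l%:R - j%:R) * (pi / k%:R) - pi / k%:R) :> R.
Proof.
move=> k0 jk lk.
have kR : 0 < k%:R :> R by rewrite ltr0n.
have range : forall d : nat, (d <= k)%N -> (0:R) <= d%:R * (pi / k%:R) /\ d%:R * (pi / k%:R) <= (pi : R).
  move=> d dk; split.
    by rewrite mulr_ge0 // divr_ge0 ?pi_ge0 // ltW.
  rewrite mulrCA -[X in _ <= X]mulr1 ler_wpM2l ?pi_ge0 //.
  by rewrite ler_pdivrMr // mul1r ler_nat.
case: (leqP j l) => jl.
- have -> : l%:R - j%:R = (l - j)%N%:R :> R by rewrite natrB.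
  case E : (l - j)%N => [|d].
    by rewrite mul0r sin0 mul0r.
  have -> : d.+1%:R * (pi / k%:R) - pi / k%:R = d%:R * (pi / k%:R) :> R.
    by rewrite -natr1 mulrDl mul1r addrK.
  apply: mulr_ge0; apply: sin_ge0_pi; (apply/andP; apply: range; lia).
- have -> : l%:R - j%:R = - (j - l)%N%:R :> R by rewrite natrB ?opprB //; lia.
  case E : (j - l)%N => [|d]; first lia.
  have -> : - d.+1%:R * (pi / k%:R) - pi / k%:R = - (d.+2%:R * (pi / k%:R)) :> R.
    rewrite -!natr1; ring.
  rewrite mulNr !sinN mulrNN.
  apply: mulr_ge0; apply: sin_ge0_pi; (apply/andP; apply: range; lia).
Qed.

Lemma vtxE m j : vtx m j = rho R m *: dir m j.
Proof. by rewrite /vtx add0r. Qed.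

Lemma csD m j (u v : 'rV[R]_2) (a b : R) :
  cs m j (a *: u + b *: v) = a * cs m j u + b * cs m j v.
Proof. rewrite /cs !mxE; ring. Qed.

Lemma crD m j (u v : 'rV[R]_2) (a b : R) :
  cr m j (a *: u + b *: v) = a * cr m j u + b * cr m j v.
Proof. rewrite /cr !mxE; ring. Qed.

Lemma cs_dir m i j l : cs m j (dir i l) = cos (ang i l - ang m j).
Proof. by rewrite /cs /dir pt2E0 pt2E1 cosB; ring. Qed.

Lemma cr_dir m i j l : cr m j (dir i l) = sin (ang i l - ang m j).
Proof. by rewrite /cr /dir pt2E0 pt2E1 sinB; ring. Qed.

Lemma csZ m j (u : 'rV[R]_2) a : cs m j (a *: u) = a * cs m j u.
Proof. rewrite /cs !mxE; ring. Qed.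

Lemma gen1 (K : R) : K != 0 -> 2 * pi / K = (pi / K) *+ 2.
Proof. by move=> h; rewrite -mulr_natr; field. Qed.

Lemma gen2 (K L J : R) : K != 0 ->
  (0 + 2 * pi * L / K) - (0 + 2 * pi * J / K) = ((L - J) * (pi / K)) *+ 2.
Proof. by move=> h; rewrite -mulr_natr; field. Qed.

Lemma same_level m j l : (j < kk m)%N -> (l < kk m)%N ->
  nrm m j (vtx m l) <= (1 + cos (alpha R m)) * rho R m.
Proof.
move=> jk lk.
rewrite /nrm vtxE !csZ !cs_dir -mulrDr mulrC.
apply: ler_wpM2r; first exact: rho_ge0.
pose a : R := pi / (kk m)%:R.
pose x : R := (l%:R - j%:R) * a.
have hA : alpha R m = a *+ 2 by rewrite /alpha /a gen1 // kkR.
have h1 : ang m l - ang m j = x *+ 2.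
  exact: (gen2 _ _ (kkR m)).
rewrite angS.
move: (ang m l) (ang m j) (alpha R m) h1 hA => L J A h1 hA.
have -> : L - (J + A) = (x - a) *+ 2.
  by rewrite opprD addrA h1 hA mulrnBl.
rewrite h1 hA -subr_ge0.
have -> : 1 + cos (a *+ 2) - (cos (x *+ 2) + cos ((x - a) *+ 2))
  = 1 + cos (a *+ 2) - cos (x *+ 2) - cos ((x - a) *+ 2).
  by rewrite opprD addrA.
rewrite trig_id -mulrA; apply: mulr_ge0.
  apply: mulr_ge0 => //.
  apply: cos_ge0_pihalf; apply/andP; split.
    by rewrite (@le_trans _ _ 0) // ?oppr_le0 ?divr_ge0 ?pi_ge0 // ltW // ltr0n kk_gt0.
  rewrite /a /kk ler_pM2l ?pi_gt0 // lef_pV2 ?posrE ?ltr0n ?expn_gt0 //.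
  by rewrite ler_nat -[X in (X <= _)%N]expn1 leq_exp2l.
rewrite /x /a; exact: sin_sign (kk_gt0 m) jk lk.
Qed.


Lemma cs_sum m j n (w : 'I_n -> R) (v : 'I_n -> 'rV[R]_2) :
  cs m j (\sum_i w i *: v i) = \sum_i w i * cs m j (v i).
Proof.
rewrite /cs !summxE !mulr_sumr -big_split /=; apply: eq_bigr => i _.
rewrite !mxE; ring.
Qed.

Lemma nrm_sum m j n (w : 'I_n -> R) (v : 'I_n -> 'rV[R]_2) :
  nrm m j (\sum_i w i *: v i) = \sum_i w i * nrm m j (v i).
Proof.
rewrite /nrm !cs_sum -big_split /=; apply: eq_bigr => i _; ring.
Qed.

Lemma Lf_mm m : Lf m m%:R = (1 + cos (alpha R m)) * rho R m.
Proof. by rewrite /Lf subrr mulr0 addr0. Qed.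

Lemma vtx_bound m j i l : (j < kk m)%N -> (l < kk i)%N ->
  nrm m j (vtx i l) <= Lf m i%:R.
Proof.
move=> jk lk.
case: (eqVneq i m) jk => [<-|ne] jk.
  by rewrite Lf_mm; apply: same_level.
have ne' : i <> m by apply/eqP.
apply: le_trans (KI R ne').
rewrite /nrm vtxE !csZ !cs_dir -mulrDr mulrC.
apply: ler_wpM2r; first exact: rho_ge0.
have := cos_le1 (ang i l - ang m j); have := cos_le1 (ang i l - ang m j.+1).
lra.
Qed.

Lemma hull_ok i u m j : Pset i u -> (j < kk m)%N -> nrm m j u <= Lf m i%:R.
Proof.
move=> [w [w0 [w1 ->]]] jk.
rewrite nrm_sum.
apply: le_trans (_ : \sum_l w l * Lf m i%:R <= _).
  apply: ler_sum => l _; apply: ler_wpM2l => //.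
  exact: vtx_bound.
by rewrite -mulr_suml w1 mul1r.
Qed.

Lemma hull_x0 i u : Pset i u -> `|u 0 0| <= rho R i.
Proof.
move=> [w [w0 [w1 ->]]].
rewrite summxE.
apply: le_trans (ler_norm_sum _ _ _) _.
apply: le_trans (_ : \sum_l w l * rho R i <= _); last by rewrite -mulr_suml w1 mul1r.
apply: ler_sum => l _.
rewrite vtxE !mxE /=.
rewrite normrM ger0_norm // ler_wpM2l // normrM ger0_norm ?rho_ge0 //.
rewrite -[X in _ <= X]mulr1 ler_wpM2l ?rho_ge0 //.
exact: cos_max.
Qed.

End G.
Section H.
Variable R : realType.

Lemma transition (f : nat -> R) n : forall a, 0 <= f a -> f (a + n)%N < 0 ->
  exists p, [/\ (a <= p)%N, (p < a + n)%N, 0 <= f p & f p.+1 < 0].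
Proof.
elim: n => [|n IH] a fa fb.
  by rewrite addn0 in fb; move: (lt_le_trans fb fa); rewrite ltxx.
case: (ltP (f a.+1) 0) => h.
  by exists a; split => //; lia.
have fb' : f (a.+1 + n)%N < 0 by rewrite addSnnS.
have [p [h1 h2 h3 h4]] := IH a.+1 h fb'.
by exists p; split => //; lia.
Qed.

Lemma alpha_bounds m : 0 < alpha R m < pi / 2.
Proof.
rewrite alphaE; apply/andP; split.
  by rewrite divr_gt0 ?pi_gt0 // ltr0n expn_gt0.
rewrite ltr_pM2l ?pi_gt0 // ltf_pV2 ?posrE ?ltr0n ?expn_gt0 //.
by rewrite ltr_nat -[X in (X < _)%N]expn1 ltn_exp2l.
Qed.

Lemma sin_alpha_gt0 m : 0 < sin (alpha R m).
Proof. by apply: sin_gt0_pihalf; exact: alpha_bounds. Qed.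

Lemma cos_alpha_ge0 m : 0 <= cos (alpha R m).
Proof.
apply: cos_ge0_pihalf; have /andP[h1 h2] := alpha_bounds m.
apply/andP; split; last exact: ltW.
by rewrite (le_trans _ (ltW h1)) // oppr_le0 divr_ge0 // pi_ge0.
Qed.

Lemma cr_half m p (u : 'rV[R]_2) : cr m (p + 2 ^ m.+2) u = - cr m p u.
Proof. by rewrite /cr ang_half cosDpi sinDpi; ring. Qed.

Lemma cr_full m (u : 'rV[R]_2) : cr m (kk m) u = cr m 0 u.
Proof. by rewrite /cr ang_full ang0 cos2pi sin2pi cos0 sin0. Qed.

Lemma dir_full m : dir R m (kk m) = dir R m 0.
Proof. by rewrite /dir ang_full ang0 cos2pi sin2pi cos0 sin0. Qed.

Lemma dir_half m : dir R m (0 + 2 ^ m.+2) = - dir R m 0.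
Proof.
rewrite /dir ang_half cosDpi sinDpi; apply/rowP => j; rewrite !mxE.
by case: ifP => _.
Qed.

Lemma half_lt m : (2 ^ m.+2 < kk m)%N.
Proof. by rewrite /kk ltn_exp2l. Qed.


Lemma sum_if1 n (p : 'I_n) (c : R) (F : 'I_n -> 'rV[R]_2) :
  \sum_j (if j == p then c else 0) *: F j = c *: F p.
Proof.
rewrite (bigD1 p) //= eqxx big1 ?addr0 // => j /negPf ->; exact: scale0r.
Qed.

Lemma sum_if2 n (p : 'I_n) (c : R) :
  \sum_j (if j == p then c else 0) = c.
Proof.
rewrite (bigD1 p) //= eqxx big1 ?addr0 // => j /negPf -> //.
Qed.

Lemma hull_build m (p q : 'I_(kk m)) (A B : R) : 0 < rho R m ->
  0 <= A -> 0 <= B -> A + B <= rho R m ->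
  Pset m (A *: dir R m p + B *: dir R m q).
Proof.
move=> r0 A0 B0 AB.
set r := rho R m.
pose o : 'I_(kk m) := Ordinal (kk_gt0 m).
pose h : 'I_(kk m) := Ordinal (half_lt m).
pose Z := (1 - (A + B) / r) / 2.
have Z0 : 0 <= Z.
  rewrite /Z divr_ge0 // subr_ge0 ler_pdivrMr // mul1r //.
exists (fun j => (if j == p then A / r else 0) + (if j == q then B / r else 0)
   + (if j == o then Z else 0) + (if j == h then Z else 0)).
split; first by move=> j; rewrite !addr_ge0 //; case: ifP => // _; rewrite divr_ge0 // ltW.
split.
  rewrite !big_split /= !sum_if2 /Z; field; exact: lt0r_neq0.
rewrite (eq_bigr (fun j => (if j == p then A / r else 0) *: vtx R m j
   + (if j == q then B / r else 0) *: vtx R m j + (if j == o then Z else 0) *: vtx R m j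
   + (if j == h then Z else 0) *: vtx R m j)); last by move=> j _; rewrite !scalerDl.
rewrite !big_split /= !sum_if1 !vtxE.
have -> : dir R m h = - dir R m o by rewrite -dir_half.
have rn : r != 0 by exact: lt0r_neq0.
by rewrite -/r !scalerA scalerN addrK !divfK.
Qed.


Lemma cr0 m (u : 'rV[R]_2) : cr m 0 u = u 0 1.
Proof. by rewrite /cr ang0 cos0 sin0 mul1r mul0r subr0. Qed.

Lemma cr1 m (u : 'rV[R]_2) : cr m 1 u = cos (alpha R m) * u 0 1 - sin (alpha R m) * u 0 0.
Proof. by rewrite /cr angS ang0 add0r. Qed.

Lemma pt2_00 : pt2 0 0 = 0 :> 'rV[R]_2.
Proof. by apply/rowP => j; rewrite !mxE; case: ifP. Qed.

Lemma pt2_lin (a b x y x' y' : R) :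
  a *: pt2 x y + b *: pt2 x' y' = pt2 (a * x + b * x') (a * y + b * y').
Proof. by apply/rowP => j; rewrite !mxE; case: ifP. Qed.

Lemma rho_gt0 m : (0 < m)%N -> 0 < rho R m.
Proof.
case: m => // n _; rewrite /rho hhS.
have := hh_le1 R n; have := hh_gt0 R n; lra.
Qed.

Lemma H_sub_V m (u : 'rV[R]_2) : (0 < m)%N ->
  (forall j, (j < kk m)%N -> nrm m j u <= (1 + cos (alpha R m)) * rho R m) ->
  Pset m u.
Proof.
move=> m0 H.
have r0 := rho_gt0 m0.
have hk : kk m = (2 ^ m.+2 + 2 ^ m.+2)%N by rewrite /kk expnS mul2n addnn.
have hlt := half_lt m.
pose o : 'I_(kk m) := Ordinal (kk_gt0 m).
have S0 := sin_alpha_gt0 m.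
have C0 := cos_alpha_ge0 m.
case: (pselect (exists j0, (j0 < kk m)%N /\ cr m j0 u < 0)) => [[j0 [j0k cj0]] | none].
  have [p [pk cp cp1]] : exists p, [/\ (p < kk m)%N, 0 <= cr m p u & cr m p.+1 u < 0].
    case: (leP 0 (cr m 0 u)) => c0.
      have cj0' : cr m (0 + j0) u < 0 by rewrite add0n.
      have [p [_ h2 h3 h4]] := @transition (fun j => cr m j u) j0 0 c0 cj0'.
      by exists p; split => //; lia.
    have ch : 0 <= cr m (0 + 2 ^ m.+2) u by rewrite cr_half; lra.
    have ck : cr m (0 + 2 ^ m.+2 + 2 ^ m.+2) u < 0 by rewrite add0n -hk cr_full.
    have [p [_ h2 h3 h4]] := @transition (fun j => cr m j u) (2 ^ m.+2) _ ch ck.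
    by exists p; split => //; lia.
  pose A := - cr m p.+1 u / sin (alpha R m).
  pose B := cr m p u / sin (alpha R m).
  have Sn : sin (alpha R m) != 0 by exact: lt0r_neq0.
  have decomp : u = A *: dir R m p + B *: dir R m p.+1.
    rewrite /dir pt2_lin {1}(rV2E u) /A /B /cr angS cosD sinD.
    have := cos2Dsin2 (ang R m p).
    move: (cos (ang R m p)) (sin (ang R m p)) (cos (alpha R m)) (sin (alpha R m)) Sn.
    move=> c s C S Sn hcs.
    congr pt2.
      transitivity (u 0 0 * (c ^+ 2 + s ^+ 2)); first by rewrite hcs mulr1.
      by field.
    transitivity (u 0 1 * (c ^+ 2 + s ^+ 2)); first by rewrite hcs mulr1.
    by field.
  have nrmE : nrm m p u = (A + B) * (1 + cos (alpha R m)).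
    rewrite decomp /nrm !csD !cs_dir angS !subrr cos0.
    rewrite /A /B; move: (ang R m p) (alpha R m) => th al.
    have e1 : th + al - th = al by ring.
    have e2 : th - (th + al) = - al by ring.
    rewrite e1 e2 cosN; ring.

  have ABle : A + B <= rho R m.
    have := H p pk; rewrite nrmE mulrC ler_pM2l //; lra.
  have A0 : 0 <= A by rewrite /A divr_ge0 // ?ltW //; lra.
  have B0 : 0 <= B by rewrite /B divr_ge0 // ltW.
  case: (ltnP p.+1 (kk m)) => hq.
    rewrite decomp; exact: (hull_build (Ordinal pk) (Ordinal hq)).
  have ep : p.+1 = kk m by apply/eqP; rewrite eqn_leq hq pk.
  rewrite decomp ep dir_full.
  exact: (hull_build (Ordinal pk) o).
have all0 : forall j, (j < kk m)%N -> 0 <= cr m j u.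
  move=> j jk; rewrite leNgt; apply/negP => h; apply: none; by exists j.
have c0 : cr m 0 u = 0.
  have := all0 0%N (kk_gt0 m); have := all0 (0 + 2 ^ m.+2)%N hlt.
  rewrite cr_half; lra.
have c1 : cr m 1 u = 0.
  have h1 : (1 + 2 ^ m.+2 < kk m)%N by rewrite hk ltn_add2r (ltn_exp2l 0).
  have := all0 1%N (leq_ltn_trans (leq_addr _ _) h1); have := all0 _ h1.
  rewrite cr_half; lra.
rewrite cr0 in c0; rewrite cr1 c0 mulr0 sub0r in c1.
have u0 : u 0 0 = 0.
  have : sin (alpha R m) * u 0 0 = 0 by rewrite -[LHS]opprK c1 oppr0.
  by move/eqP; rewrite mulf_eq0 (negbTE (lt0r_neq0 S0)) => /eqP.
have -> : u = 0 *: dir R m o + 0 *: dir R m o.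
  by rewrite !scale0r addr0 (rV2E u) c0 u0 pt2_00.
apply: hull_build => //; lra.
Qed.

End H.
Section F.
Variable R : realType.
Notation V := 'rV[R]_(2 + 0 + 1).

Definition i0 : 'I_(2 + 0 + 1) := lshift 1 (lshift 0 (0 : 'I_2)).
Definition i1 : 'I_(2 + 0 + 1) := lshift 1 (lshift 0 (1 : 'I_2)).
Definition i2 : 'I_(2 + 0 + 1) := rshift (2 + 0) (0 : 'I_1).

Lemma aff_cont (a0 a1 a2 b : R) :
  continuous (fun w : V => a0 * w 0 i0 + a1 * w 0 i1 + a2 * w 0 i2 + b).
Proof.
move=> w.
apply: (@continuousD _ _ _ (fun w : V => a0 * w 0 i0 + a1 * w 0 i1 + a2 * w 0 i2) (fun _ => b)); last exact: cst_continuous.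
apply: (@continuousD _ _ _ (fun w : V => a0 * w 0 i0 + a1 * w 0 i1) (fun w : V => a2 * w 0 i2)).
  apply: (@continuousD _ _ _ (fun w : V => a0 * w 0 i0) (fun w : V => a1 * w 0 i1)).
    apply: (@continuousM _ _ (fun _ => a0) (fun w : V => w 0 i0)); [exact: cst_continuous | exact: coord_continuous].
  apply: (@continuousM _ _ (fun _ => a1) (fun w : V => w 0 i1)); [exact: cst_continuous | exact: coord_continuous].
apply: (@continuousM _ _ (fun _ => a2) (fun w : V => w 0 i2)); [exact: cst_continuous | exact: coord_continuous].
Qed.

Lemma aff_closed (a0 a1 a2 b : R) :
  closed [set w : V | a0 * w 0 i0 + a1 * w 0 i1 + a2 * w 0 i2 + b <= 0].
Proof.
apply: (@preimage_closed _ _ (fun w : V => a0 * w 0 i0 + a1 * w 0 i1 + a2 * w 0 i2 + b) [set x | x <= 0]).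
  by move=> w _; apply: aff_cont.
exact: closed_le.
Qed.


Definition XX (w : V) : 'rV[R]_2 := pt2 (w 0 i0 - w 0 i2) (w 0 i1).
Definition Mset : set V :=
  [set w : V | 1 <= w 0 i2 /\ forall m j, (j < kk m)%N -> nrm m j (XX w) <= Lf m (w 0 i2)].

Definition cA m j : R := cos (ang R m j) + cos (ang R m j.+1).
Definition cB m j : R := sin (ang R m j) + sin (ang R m j.+1).
Definition sl m : R := (hh R m + EE R m) / 4.
Definition cK m : R := (1 + cos (alpha R m)) * rho R m.

Definition aff m j (w : V) : R :=
  cA m j * w 0 i0 + cB m j * w 0 i1 + (- cA m j - sl m) * w 0 i2 + (sl m * m%:R - cK m).

Lemma aff_eq m j (w : V) : aff m j w = nrm m j (XX w) - Lf m (w 0 i2).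
Proof.
rewrite /aff /nrm /cs /XX !pt2E0 !pt2E1 /Lf -/(sl m) -/(cK m) /cA /cB.
move: (cos (ang R m j)) (cos (ang R m j.+1)) (sin (ang R m j)) (sin (ang R m j.+1)).
move: (sl m) (cK m) (m%:R : R) => a b c d e f g.
ring.
Qed.

Lemma cons_aff m j (w : V) : nrm m j (XX w) <= Lf m (w 0 i2) <-> aff m j w <= 0.
Proof. by rewrite aff_eq subr_le0. Qed.

Lemma Mset_closed : closed Mset.
Proof.
have -> : Mset = [set w : V | 0 * w 0 i0 + 0 * w 0 i1 + (-1) * w 0 i2 + 1 <= 0] `&`
   \bigcap_(m in setT) \bigcap_(j in [set j | (j < kk m)%N])
     [set w : V | cA m j * w 0 i0 + cB m j * w 0 i1 + (- cA m j - sl m) * w 0 i2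
        + (sl m * m%:R - cK m) <= 0].
  rewrite predeqE => w; split.
    move=> [h1 h2]; split; first by rewrite /=; lra.
    by move=> m _ j /= jk; rewrite -/(aff m j w) -cons_aff; apply: h2.
  move=> [h1 h2]; split; first by move: h1; rewrite /=; lra.
  by move=> m j jk; rewrite cons_aff; exact: (h2 m I j jk).
apply: closedI; first exact: aff_closed.
apply: closed_bigI => m _; apply: closed_bigI => j _; exact: aff_closed.
Qed.

Lemma Mset_convex : Defs.convex_set Mset.
Proof.
move=> w w' t [h1 h2] [h1' h2'] t0 t1.
have E : forall i, (t *: w + (1 - t) *: w') 0 i = t * w 0 i + (1 - t) * w' 0 i.
  by move=> i; rewrite !mxE.
split.
  rewrite E; nra.
move=> m j jk; rewrite cons_aff.
have -> : aff m j (t *: w + (1 - t) *: w') = t * aff m j w + (1 - t) * aff m j w'.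
  rewrite /aff !E; ring.
have := h2 m j jk; have := h2' m j jk; rewrite !cons_aff => a b.
nra.
Qed.


Definition Sset : set 'rV[R]_2 :=
  bigcup [set i : nat | (0 < i)%N] (fun i => translate_e1 i (Pset i)).

Lemma rowE0 (x : 'rV[R]_2) (y : 'rV[R]_0) (z : 'rV[R]_1) :
  (row_mx (row_mx x y) z) 0 i0 = x 0 0.
Proof. by rewrite /i0 !row_mxEl. Qed.
Lemma rowE1 (x : 'rV[R]_2) (y : 'rV[R]_0) (z : 'rV[R]_1) :
  (row_mx (row_mx x y) z) 0 i1 = x 0 1.
Proof. by rewrite /i1 !row_mxEl. Qed.
Lemma rowE2 (x : 'rV[R]_2) (y : 'rV[R]_0) (z : 'rV[R]_1) :
  (row_mx (row_mx x y) z) 0 i2 = z 0 0.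
Proof. by rewrite /i2 row_mxEr. Qed.

Lemma e1E0 : e1 R 0 0 = 1. Proof. exact: pt2E0. Qed.
Lemma e1E1 : e1 R 0 1 = 0. Proof. exact: pt2E1. Qed.

Lemma micp (x : 'rV[R]_2) : Sset x <-> exists (y : 'rV[R]_0) (z : 'rV[R]_1),
  int_vec z /\ Mset (row_mx (row_mx x y) z).
Proof.
split.
  move=> [i i0' [v Pv <-]].
  exists 0, (const_mx i%:R); split.
    by move=> k; rewrite mxE natr_int.
  rewrite /Mset /= rowE2 mxE; split; first by rewrite ler1n.
  have -> : XX (row_mx (row_mx (v + i%:R *: e1 R) 0) (const_mx i%:R)) = v.
    rewrite /XX rowE0 rowE1 rowE2 !mxE eqxx mulr1 addrK.
    have -> : (1 == 0 :> 'I_2) = false by [].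
    rewrite mulr0 addr0.
    by rewrite [RHS]rV2E.
  move=> m j jk; exact: hull_ok Pv jk.
move=> [y [z [zi [h1 h2]]]].
rewrite rowE2 in h1 h2.
have : z 0 0 \is a Num.nat by rewrite -intrEge0 ?zi //; apply: le_trans h1.
move=> /natrP [n en].
rewrite en in h1 h2.
have n0 : (0 < n)%N by rewrite ler1n in h1.
have Pv : Pset n (XX (row_mx (row_mx x y) z)).
  apply: H_sub_V => // j jk.
  by rewrite -Lf_mm; apply: h2.
exists n => //.
exists (XX (row_mx (row_mx x y) z)) => //.
rewrite /XX rowE0 rowE1 rowE2 en.
apply/rowP => k; rewrite !mxE.
case: k => [[|[|//]] Hk] /=.
  rewrite mulr1 subrK; congr (x _ _); exact: val_inj.
rewrite mulr0 addr0; congr (x _ _); exact: val_inj.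
Qed.


Lemma Lf_ge0 m (t : R) : 1 <= t -> 0 <= Lf m t.
Proof.
move=> t1.
have h1 : 0 <= Lf m (1 : R).
  case: (eqVneq m 1%N) => [->|ne].
    rewrite /Lf (_ : (1 : R) - 1%:R = 0); last by rewrite subrr.
    rewrite mulr0 addr0; apply: mulr_ge0; last exact: rho_ge0.
    have := cos_geN1 (alpha R 1); lra.
  have ne' : 1%N <> m by move=> e; rewrite e eqxx in ne.
  have := KI R ne'; have := rho_ge0 R 1; lra.
have -> : Lf m t = Lf m 1 + (hh R m + EE R m) / 4 * (t - 1) by rewrite /Lf; ring.
apply: addr_ge0 => //; apply: mulr_ge0; last lra.
apply: divr_ge0 => //; apply: addr_ge0; [exact: ltW (hh_gt0 R m) | exact: EE_ge0].
Qed.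

Lemma projz (z : 'rV[R]_1) : proj_z Mset z <-> 1 <= z 0 0.
Proof.
split.
  by move=> [x [y [h1 _]]]; rewrite rowE2 in h1.
move=> h; exists (z 0 0 *: e1 R), 0; split; rewrite rowE2 //.
move=> m j jk.
have -> : XX (row_mx (row_mx (z 0 0 *: e1 R) 0) z) = 0.
  rewrite /XX rowE0 rowE1 rowE2 !mxE eqxx mulr1 subrr.
  have -> : (1 == 0 :> 'I_2) = false by [].
  by rewrite mulr0 pt2_00.
rewrite /nrm /cs !mxE !mulr0 !addr0.
exact: Lf_ge0.
Qed.


Lemma mulmx1E (z : 'rV[R]_1) d' (A : 'M[R]_(1, d')) j : (z *m A) 0 j = z 0 0 * A 0 j.
Proof. by rewrite !mxE big_ord1. Qed.

Lemma ratu : rationally_unbounded (proj_z Mset).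
Proof.
move=> d' A b HA Hb /=.
case: (boolP [forall j, A 0 j == 0]) => [/forallP A0 | /forallPn [j0 Aj0]].
  left; exists (\sum_j `|b 0 j|) => _ [z _ <-] i.
  rewrite !mxE big_ord1 (eqP (A0 i)) mulr0 add0r.
  rewrite (bigD1 i) //= lerDl sumr_ge0 // => k _.
have qex : forall j, exists q : rat, A 0 j = ratr q by move=> j; exact: HA.
pose q j := projT1 (cid (qex j)).
have qE : forall j, A 0 j = ratr (q j) by move=> j; exact: (projT2 (cid (qex j))).
pose N : int := \prod_j denq (q j).
have N0 : 0 < N by rewrite /N prodr_gt0 // => j _; exact: denq_gt0.
right; exists (\row_j (N%:~R * A 0 j)); split; [|split].
- move=> _ lam [z zI <-] lam0.
  exists (const_mx (z 0 0 + lam * N%:~R)).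
    apply/projz; rewrite mxE.
    have := (projz z).1 zI.
    have : 0 <= lam * N%:~R by rewrite mulr_ge0 // ler0z ltW.
    lra.
  apply/rowP => j; rewrite !mxE !big_ord1 !mxE; ring.
- apply/negP => /eqP r0.
  have := congr1 (fun M : 'rV[R]_d' => M 0 j0) r0; rewrite !mxE => /eqP.
  rewrite mulf_eq0 (negbTE Aj0) orbF intr_eq0 => /eqP N00.
  by move: N0; rewrite N00 ltxx.
- move=> j; rewrite mxE qE.
  have -> : (N%:~R : R) = ratr (N%:~R) by rewrite ratr_int.
  rewrite -rmorphM /=.
  have -> : (N%:~R * q j : rat) = ((\prod_(k | k != j) denq (q k)) * numq (q j))%:~R.
    have hN : \prod_k denq (q k) = denq (q j) * \prod_(k | k != j) denq (q k).
      by rewrite (bigD1 j).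
    rewrite /N hN !intrM numqE.
    ring.
  by rewrite ratr_int intr_int.
Qed.

Lemma disj i j : (0 < i)%N -> (0 < j)%N -> i <> j ->
  translate_e1 i (Pset i) `&` translate_e1 j (Pset j) = set0 :> set 'rV[R]_2.
Proof.
move=> _ _ ne.
rewrite -subset0 => x [[v Pv ex] [v' Pv' ex']].
have h := hull_x0 Pv; have h' := hull_x0 Pv'.
have := rho_lt R i; have := rho_lt R j => r1 r2.
have e : v 0 0 + i%:R = v' 0 0 + j%:R.
  have := congr1 (fun M : 'rV[R]_2 => M 0 0) (etrans ex (esym ex')).
  by rewrite !mxE eqxx !mulr1.
move: h h'; rewrite !ler_norml => /andP[h1 h2] /andP[h3 h4].
case: (ltngtP i j) => [lt|gt|eq]; last by [].
- have : i.+1%:R <= j%:R :> R by rewrite ler_nat.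
  rewrite -natr1; lra.
- have : j.+1%:R <= i%:R :> R by rewrite ler_nat.
  rewrite -natr1; lra.
Qed.

End F.
Unset Implicit Arguments.

Theorem corollary1 (R : realType) :
  exists (g : nat -> nat) (P : nat -> set 'rV[R]_2),
    (forall i, (0 < i)%N -> (0 < g i)%N) /\
    (forall i j, (0 < i)%N -> (i < j)%N -> (g i < g j)%N) /\
    (forall i, (0 < i)%N -> regular_polygon (g i) (P i)) /\
    rational_MICP_representable
      (bigcup [set i : nat | (0 < i)%N] (fun i => translate_e1 i (P i))) /\
    (forall i j, (0 < i)%N -> (0 < j)%N -> i <> j ->
       translate_e1 i (P i) `&` translate_e1 j (P j) = set0).
Proof.
exists kk, (fun i => Pset i).
split; first by move=> i _; exact: kk_gt0.
split; first by move=> i j _ ij; rewrite /kk ltn_exp2l.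
split.
  move=> i i0; split.
    rewrite /kk !expnS; have := expn_gt0 2 i; lia.
  exists 0, (rho R i), 0; split; first exact: rho_gt0.
  by [].
split; last by move=> i j; exact: disj.
exists 0%N, 1%N, (@Mset R); split; last exact: ratu.
split; first exact: Mset_closed.
split; first exact: Mset_convex.
exact: micp.
Qed.
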